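(* Let $\epsilon > 0$, and fix integers $k \ge 2$ and $n > k$. Consider the randomized algorithm $\mathcal{A}$ which, on input a database $D$ of $n$ rows, does the following. It draws independent $Z_1 \sim \mathrm{Lap}\!\left(\frac{9 + 5/n}{\epsilon/2}\right)$ and $Z_2 \sim \mathrm{Lap}\!\left(\frac{7}{\epsilon/2}\right)$. It sets $\widehat{\mathrm{SSA}} = \mathrm{SSA}(D) + Z_1$, $\widehat{\mathrm{SSE}} = \mathrm{SSE}(D) + Z_2$, and $\widehat F = \frac{\widehat{\mathrm{SSA}}/(k-1)}{\widehat{\mathrm{SSE}}/(n-k)}$. It outputs the triple $(\widehat F, \widehat{\mathrm{SSA}}, \widehat{\mathrm{SSE}})$. Then $\mathcal{A}$ is $\epsilon$-differentially private.
   Context: A database $D$ consists of $n$ rows. Each row is a pair $(g, y)$ with group label $g \in \{1,\dots,k\}$ and response $y \in [0,1]$. Let $n_i$ be the number of rows in group $i$, with responses $y_{i1},\dots,y_{in_i}$ and group mean $\overline{y}_i$. Let $\overline{y}$ be the mean of all responses; empty groups contribute nothing. Define $\mathrm{SSA}(D) = \sum_{i=1}^k n_i(\overline{y}_i - \overline{y})^2$ and $\mathrm{SSE}(D) = \sum_{i=1}^k\sum_{j=1}^{n_i}(y_{ij}-\overline{y}_i)^2$. $\mathrm{Lap}(b)$ denotes the Laplace distribution with density $e^{-|x|/b}/(2b)$ on $\mathbb{R}$. The output $\widehat F$ is well defined almost surely, since $\widehat{\mathrm{SSE}} \neq 0$ with probability $1$. Two databases with $n$ rows each are neighboring if they differ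 in exactly one row; both the label and the response of that row may change. A randomized algorithm $f$ with range $R$ is $\epsilon$-differentially private if $\Pr[f(D)\in S] \le e^{\epsilon}\Pr[f(D')\in S]$ for all neighboring $D, D'$ and all measurable $S \subseteq R$. *)

(* Defs.v *)
From Stdlib Require Import Reals Lra Lia List Classical ClassicalEpsilon.
Import ListNotations.
Open Scope R_scope.

(* A row is a pair (g, y): group label g (a natural number) and response y. *)
Definition row := (nat * R)%type.
Definition db := list row.

Definition valid_db (k n : nat) (D : db) : Prop :=
  length D = n /\
  forall r, In r D -> (1 <= fst r <= k)%nat /\ 0 <= snd r <= 1.

Definition neighboring (n : nat) (D D' : db) : Prop :=
  length D = n /\ length D' = n /\
  exists j, (j < n)%nat /\ nth j D (0%nat, 0) <> nth j D' (0%nat, 0) /\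
    forall i, i <> j -> nth i D (0%nat, 0) = nth i D' (0%nat, 0).

Definition Rsum (l : list R) : R := fold_right Rplus 0 l.

Definition group (D : db) (i : nat) : list R :=
  map snd (filter (fun r => Nat.eqb (fst r) i) D).

Definition n_i (D : db) (i : nat) : R := INR (length (group D i)).
Definition mean_i (D : db) (i : nat) : R := Rsum (group D i) / n_i D i.
Definition mean_all (D : db) : R := Rsum (map snd D) / INR (length D).

Definition sum_groups (k : nat) (f : nat -> R) : R := Rsum (map f (seq 1 k)).

Definition SSA (k : nat) (D : db) : R :=
  sum_groups k (fun i => n_i D i * (mean_i D i - mean_all D) ^ 2).

Definition SSE (k : nat) (D : db) : R :=
  sum_groups k (fun i => Rsum (map (fun y => (y - mean_i D i) ^ 2) (group D i))).

Definition lap_pdf (b x : R) : R := exp (- Rabs x / b) / (2 * b).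

Lemma lap_pdf_shift_cont (b c t : R) :
  continuity_pt (fun x => lap_pdf b (x - c)) t.
Proof.
  unfold lap_pdf, Rdiv.
  apply continuity_pt_mult; [| apply continuity_pt_const; intros ? ?; reflexivity].
  apply (continuity_pt_comp (fun x => - Rabs (x - c) * / b) exp).
  - apply continuity_pt_mult; [| apply continuity_pt_const; intros ? ?; reflexivity].
    apply continuity_pt_opp.
    apply (continuity_pt_comp (fun x => x - c) Rabs).
    + apply continuity_pt_minus; [apply derivable_continuous_pt, derivable_pt_id |
        apply continuity_pt_const; intros ? ?; reflexivity].
    + apply Rcontinuity_abs.
  - apply derivable_continuous_pt, derivable_pt_exp.
Qed.

(* Pr[c + Z in [x, y]] for Z ~ Lap(b): the integral of the density. *)
Definition lap_mass (b c x y : R) : R :=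
  match Rle_dec x y with
  | left h => RiemannInt (continuity_implies_RiemannInt h
                            (fun t _ => lap_pdf_shift_cont b c t))
  | right _ => 0
  end.

Definition rect := ((R * R) * (R * R))%type.
Definition in_rect (r : rect) (p : R * R) : Prop :=
  let '((x1, y1), (x2, y2)) := r in x1 <= fst p <= y1 /\ x2 <= snd p <= y2.
Definition rect_mass (b1 c1 b2 c2 : R) (r : rect) : R :=
  let '((x1, y1), (x2, y2)) := r in lap_mass b1 c1 x1 y1 * lap_mass b2 c2 x2 y2.

Definition is_lower_bound (E : R -> Prop) (m : R) : Prop := forall x, E x -> m <= x.
Definition is_glb (E : R -> Prop) (m : R) : Prop :=
  is_lower_bound E m /\ forall m', is_lower_bound E m' -> m' <= m.

(* infimum of a set of reals (0 if it has none; it always exists below). *)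
Definition inf_R (E : R -> Prop) : R :=
  match excluded_middle_informative (exists l, is_glb E l) with
  | left h => proj1_sig (constructive_indefinite_description _ h)
  | right _ => 0
  end.

(* Probability that (c1+Z1, c2+Z2) lies in A: the (outer) measure obtained by
   covering A with countably many rectangles (Caratheodory extension of the
   product measure; agrees with the probability on all Borel sets). *)
Definition prob2 (b1 c1 b2 c2 : R) (A : R * R -> Prop) : R :=
  inf_R (fun s => exists r : nat -> rect,
           (forall p, A p -> exists m, in_rect (r m) p) /\
           infinite_sum (fun m => rect_mass b1 c1 b2 c2 (r m)) s).

Definition R3 := (R * R * R)%type.
Inductive borel3 : (R3 -> Prop) -> Prop :=
  | borel3_box : forall a1 b1 a2 b2 a3 b3 : R,
      borel3 (fun p => let '(x, y, z) := p in
                a1 < x < b1 /\ a2 < y < b2 /\ a3 < z < b3)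
  | borel3_compl : forall A, borel3 A -> borel3 (fun p => ~ A p)
  | borel3_union : forall A : nat -> R3 -> Prop,
      (forall m, borel3 (A m)) -> borel3 (fun p => exists m, A m p)
  | borel3_ext : forall A B, borel3 A -> (forall p, A p <-> B p) -> borel3 B.

Definition b_SSA (eps : R) (n : nat) : R := (9 + 5 / INR n) / (eps / 2).
Definition b_SSE (eps : R) : R := 7 / (eps / 2).

(* output on noisy values (a, e) = (SSA^, SSE^) *)
Definition output (k n : nat) (a e : R) : R3 :=
  ((a / INR (k - 1)) / (e / INR (n - k)), a, e).

Definition prob_alg (eps : R) (k n : nat) (D : db) (S : R3 -> Prop) : R :=
  prob2 (b_SSA eps n) (SSA k D) (b_SSE eps) (SSE k D)
        (fun p => S (output k n (fst p) (snd p))).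

(* Main.v *)
Require Import Defs.
From Stdlib Require Import Reals Lra Lia List Classical ClassicalEpsilon.
Import ListNotations.
Open Scope R_scope.

Lemma exp_le_mono x y : x <= y -> exp x <= exp y.
Proof. intros [H|H]; [left; apply exp_increasing; auto | subst; lra]. Qed.

Lemma pdf_le b c c' t : 0 < b ->
  lap_pdf b (t - c) <= exp (Rabs (c - c') / b) * lap_pdf b (t - c').
Proof.
  intros Hb. unfold lap_pdf.
  assert (H2 : 0 < / (2*b)) by (apply Rinv_0_lt_compat; lra).
  unfold Rdiv at 2 4. rewrite <- Rmult_assoc, <- exp_plus.
  apply Rmult_le_compat_r; [lra|].
  apply exp_le_mono.
  assert (Ht : Rabs (t - c') <= Rabs (t - c) + Rabs (c - c')).
  { replace (t - c') with ((t - c) + (c - c')) by ring. apply Rabs_triang. }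
  unfold Rdiv. rewrite <- Ropp_mult_distr_l, <- Ropp_mult_distr_l.
  assert (Hb' : 0 < / b) by (apply Rinv_0_lt_compat; lra).
  nra.
Qed.

Lemma lap_mass_nonneg b c x y : 0 < b -> 0 <= lap_mass b c x y.
Proof.
  intros Hb. unfold lap_mass. destruct (Rle_dec x y) as [h|h]; [|lra].
  pose proof (RiemannInt_P14 x y 0) as p0.
  rewrite <- (Rmult_0_l (y - x)). rewrite <- (RiemannInt_P15 p0).
  apply RiemannInt_P19; auto.
  intros t _. unfold fct_cte, lap_pdf.
  assert (0 < exp (- Rabs (t - c) / b)) by apply exp_pos.
  unfold Rdiv. apply Rmult_le_pos; [lra|]. left; apply Rinv_0_lt_compat; lra.
Qed.

Lemma lap_mass_le b c c' x y : 0 < b ->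
  lap_mass b c x y <= exp (Rabs (c - c') / b) * lap_mass b c' x y.
Proof.
  intros Hb. unfold lap_mass. destruct (Rle_dec x y) as [h|h]; [|lra].
  set (K := exp (Rabs (c - c') / b)).
  set (pg := continuity_implies_RiemannInt h (fun t _ => lap_pdf_shift_cont b c' t)).
  pose proof (RiemannInt_P14 x y 0) as p0.
  pose proof (RiemannInt_P10 K p0 pg) as pK.
  rewrite <- (Rplus_0_l (K * RiemannInt pg)).
  rewrite <- (Rmult_0_l (y - x)) at 1. rewrite <- (RiemannInt_P15 p0).
  rewrite <- (RiemannInt_P13 p0 pg pK).
  apply RiemannInt_P19; auto.
  intros t _. unfold fct_cte. rewrite Rplus_0_l. apply pdf_le; auto.
Qed.
Lemma cv_const c : Un_cv (fun _ => c) c.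
Proof. intros e He. exists 0%nat. intros. unfold Rdist. rewrite Rminus_diag, Rabs_R0. lra. Qed.

Lemma psum_growing a : (forall m, 0 <= a m) -> Un_growing (fun N => sum_f_R0 a N).
Proof. intros H N. simpl. specialize (H (S N)). lra. Qed.

Lemma psum_nonneg a : (forall m, 0 <= a m) -> forall N, 0 <= sum_f_R0 a N.
Proof. intros H N. induction N; simpl; [apply H|]. specialize (H (S N)); lra. Qed.

Lemma series_cmp a b K s : 0 <= K -> (forall m, 0 <= a m) -> (forall m, 0 <= b m) ->
  (forall m, b m <= K * a m) -> infinite_sum a s ->
  exists t, infinite_sum b t /\ t <= K * s /\ 0 <= t.
Proof.
  intros HK Ha Hb Hba Hs.
  assert (Hsa : forall N, sum_f_R0 a N <= s) by (apply growing_ineq; auto; apply psum_growing; auto).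
  assert (Hsb : forall N, sum_f_R0 b N <= K * s).
  { intro N. apply Rle_trans with (sum_f_R0 (fun i => a i * K) N).
    - apply sum_Rle. intros. rewrite Rmult_comm. apply Hba.
    - rewrite <- scal_sum. apply Rmult_le_compat_l; auto. }
  destruct (growing_cv (fun N => sum_f_R0 b N)) as [t Ht].
  - apply psum_growing; auto.
  - exists (K * s). intros x [N ->]. apply Hsb.
  - exists t. split; [exact Ht|]. split.
    + apply (Rle_cv_lim Hsb Ht (cv_const _)).
    + apply (Rle_cv_lim (psum_nonneg b Hb) (cv_const _) Ht).
Qed.

Lemma inf_R_glb E : (exists l, is_glb E l) -> is_glb E (inf_R E).
Proof.
  intros H. unfold inf_R. destruct (excluded_middle_informative _) as [h|h].
  - exact (proj2_sig (constructive_indefinite_description _ h)).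
  - contradiction.
Qed.

Lemma inf_R_empty E : (forall x, ~ E x) -> inf_R E = 0.
Proof.
  intros H. unfold inf_R. destruct (excluded_middle_informative _) as [h|h]; auto.
  exfalso. destruct h as [l [_ Hl]]. assert (l + 1 <= l) by (apply Hl; intros x Hx; destruct (H x Hx)). lra.
Qed.

Lemma glb_exists E : (exists x, E x) -> (forall x, E x -> 0 <= x) -> exists l, is_glb E l.
Proof.
  intros [x0 Hx0] H0.
  destruct (completeness (fun y => E (- y))) as [m [Hm1 Hm2]].
  - exists 0. intros y Hy. specialize (H0 _ Hy). lra.
  - exists (- x0). rewrite Ropp_involutive. auto.
  - exists (- m). split.
    + intros x Hx. assert (- x <= m) by (apply Hm1; rewrite Ropp_involutive; auto). lra.
    + intros m' Hm'. assert (m <= - m').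
      { apply Hm2. intros y Hy. specialize (Hm' _ Hy). lra. }
      lra.
Qed.

Lemma inf_cmp (E E' : R -> Prop) K : 0 < K ->
  (forall x, E x -> 0 <= x) -> (forall x, E' x -> 0 <= x) ->
  (forall s', E' s' -> exists s, E s /\ s <= K * s') ->
  (forall s, E s -> exists s', E' s') ->
  inf_R E <= K * inf_R E'.
Proof.
  intros HK H0 H0' H1 H2.
  destruct (classic (exists s', E' s')) as [[s' Hs']|Hn].
  - destruct (H1 _ Hs') as [s [Hs _]].
    destruct (inf_R_glb E (glb_exists E (ex_intro _ s Hs) H0)) as [Hl1 _].
    destruct (inf_R_glb E' (glb_exists E' (ex_intro _ s' Hs') H0')) as [_ Hl2].
    assert (inf_R E / K <= inf_R E').
    { apply Hl2. intros x Hx. destruct (H1 _ Hx) as [y [Hy Hyx]].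
      specialize (Hl1 _ Hy). apply Rmult_le_reg_l with K; auto.
      field_simplify; lra. }
    apply Rmult_le_reg_l with (/ K). apply Rinv_0_lt_compat; auto.
    rewrite <- Rmult_assoc, Rinv_l, Rmult_1_l by lra. rewrite Rmult_comm. exact H.
  - rewrite (inf_R_empty E'), (inf_R_empty E).
    + lra.
    + intros x Hx. destruct (H2 _ Hx) as [s' Hs']. apply Hn; eauto.
    + intros x Hx. apply Hn; eauto.
Qed.

Lemma prob2_cmp b1 c1 b2 c2 c1' c2' A K : 0 < b1 -> 0 < b2 -> 0 < K ->
  (forall r, rect_mass b1 c1 b2 c2 r <= K * rect_mass b1 c1' b2 c2' r) ->
  (forall r, rect_mass b1 c1' b2 c2' r <= K * rect_mass b1 c1 b2 c2 r) ->
  prob2 b1 c1 b2 c2 A <= K * prob2 b1 c1' b2 c2' A.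
Proof.
  intros Hb1 Hb2 HK Hf Hg.
  assert (Hnn : forall c1 c2 r, 0 <= rect_mass b1 c1 b2 c2 r).
  { intros ? ? [[x1 y1] [x2 y2]]. simpl. apply Rmult_le_pos; apply lap_mass_nonneg; auto. }
  assert (Hpos : forall c1 c2 r s, infinite_sum (fun m => rect_mass b1 c1 b2 c2 (r m)) s -> 0 <= s).
  { intros c1x c2x r s Hs.
    apply (Rle_cv_lim (psum_nonneg _ (fun m => Hnn c1x c2x (r m))) (cv_const _) Hs). }
  unfold prob2. apply inf_cmp; auto.
  - intros x [r [_ Hx]]. eauto.
  - intros x [r [_ Hx]]. eauto.
  - intros s' [r [Hc Hs']].
    destruct (series_cmp (fun m => rect_mass b1 c1' b2 c2' (r m)) (fun m => rect_mass b1 c1 b2 c2 (r m)) K s')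
      as [t [Ht1 [Ht2 _]]]; auto; try lra.
    exists t. split; eauto.
  - intros s [r [Hc Hs]].
    destruct (series_cmp (fun m => rect_mass b1 c1 b2 c2 (r m)) (fun m => rect_mass b1 c1' b2 c2' (r m)) K s)
      as [t [Ht1 [Ht2 _]]]; auto; try lra.
    exists t. eauto.
Qed.
Definition ind (b : bool) (c : R) : R := if b then c else 0.
Definition Fr (s : R) (m : nat) : R := match m with O => 0 | _ => s ^ 2 / INR m end.

Lemma Fr_S s m : Fr s (S m) = s ^ 2 / INR (S m).
Proof. reflexivity. Qed.

Definition sumsq (L : list R) := Rsum (map (fun y => y ^ 2) L).
Definition Fq (L : list R) := Fr (Rsum L) (length L).
Definition all01 (L : list R) := forall x, In x L -> 0 <= x <= 1.

Lemma Rsum_cons a l : Rsum (a :: l) = a + Rsum l.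
Proof. reflexivity. Qed.

Lemma Rsum_app l1 l2 : Rsum (l1 ++ l2) = Rsum l1 + Rsum l2.
Proof. induction l1; rewrite ?app_nil_l, <- ?app_comm_cons, ?Rsum_cons; [unfold Rsum; simpl; ring| rewrite IHl1; ring]. Qed.

Lemma Rsum_bounds L : all01 L -> 0 <= Rsum L <= INR (length L).
Proof.
  induction L as [|a L IH]; intros H.
  - unfold Rsum; simpl; lra.
  - rewrite Rsum_cons. change (length (a :: L)) with (S (length L)). rewrite S_INR.
    assert (Ha := H a (or_introl eq_refl)).
    assert (IH' : 0 <= Rsum L <= INR (length L)) by (apply IH; intros x Hx; apply H; right; auto).
    lra.
Qed.

Lemma Rsum_map_plus {A} (l : list A) f g :
  Rsum (map (fun i => f i + g i) l) = Rsum (map f l) + Rsum (map g l).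
Proof. induction l; cbn [map]; [unfold Rsum; simpl; ring|]. rewrite !Rsum_cons, IHl. ring. Qed.

Lemma Rsum_map_scal {A} (l : list A) c f :
  Rsum (map (fun i => c * f i) l) = c * Rsum (map f l).
Proof. induction l; cbn [map]; [unfold Rsum; simpl; ring|]. rewrite !Rsum_cons, IHl. ring. Qed.

Lemma Rsum_map_ext {A} (l : list A) f g : (forall i, f i = g i) ->
  Rsum (map f l) = Rsum (map g l).
Proof. intros H. f_equal. apply map_ext. auto. Qed.

Lemma Rsum_map_le {A} (l : list A) f g : (forall i, f i <= g i) ->
  Rsum (map f l) <= Rsum (map g l).
Proof. intros H. induction l; cbn [map]; [unfold Rsum; simpl; lra|]. rewrite !Rsum_cons. specialize (H a). lra. Qed.

Lemma Rsum_map_abs {A} (l : list A) f :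
  Rabs (Rsum (map f l)) <= Rsum (map (fun i => Rabs (f i)) l).
Proof.
  induction l; cbn [map]; [unfold Rsum; simpl; rewrite Rabs_R0; lra|]. rewrite !Rsum_cons.
  eapply Rle_trans; [apply Rabs_triang|]. lra.
Qed.

Lemma ind_sum a c : forall len s,
  (Rsum (map (fun i => ind (Nat.eqb a i) c) (seq s len)) = c /\ (s <= a < s + len)%nat) \/
  (Rsum (map (fun i => ind (Nat.eqb a i) c) (seq s len)) = 0 /\ ~ (s <= a < s + len)%nat).
Proof.
  induction len as [|len IH]; intros s.
  - right. simpl. split; [reflexivity| lia].
  - cbn [seq map]. rewrite Rsum_cons. destruct (IH (S s)) as [[H1 H2]|[H1 H2]]; rewrite H1.
    + left. assert (a <> s) by lia. unfold ind. rewrite (proj2 (Nat.eqb_neq a s)) by auto.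
      split; [ring| lia].
    + destruct (Nat.eq_dec a s) as [->|Hne].
      * left. unfold ind. rewrite Nat.eqb_refl. split; [ring|lia].
      * right. unfold ind. rewrite (proj2 (Nat.eqb_neq a s)) by auto. split; [ring|lia].
Qed.

Lemma ind_sum_in a c k : (1 <= a <= k)%nat ->
  Rsum (map (fun i => ind (Nat.eqb a i) c) (seq 1 k)) = c.
Proof. intros H. destruct (ind_sum a c k 1) as [[H1 _]|[_ H2]]; auto. lia. Qed.

Lemma ind_sum_le a c k : 0 <= c ->
  0 <= Rsum (map (fun i => ind (Nat.eqb a i) c) (seq 1 k)) <= c.
Proof. intros H. destruct (ind_sum a c k 1) as [[H1 _]|[H1 _]]; lra. Qed.

Lemma group_cons r D i : group (r :: D) i = (if Nat.eqb (fst r) i then [snd r] else []) ++ group D i.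
Proof. unfold group. simpl. destruct (Nat.eqb (fst r) i); reflexivity. Qed.

Lemma group_app D1 D2 i : group (D1 ++ D2) i = group D1 i ++ group D2 i.
Proof. unfold group. rewrite filter_app, map_app. reflexivity. Qed.

Lemma Rsum_ind (b : bool) (y : R) : Rsum (if b then [y] else []) = ind b y.
Proof. destruct b; unfold Rsum, ind; simpl; ring. Qed.

Lemma sumsq_ind (b : bool) (y : R) : sumsq (if b then [y] else []) = ind b (y ^ 2).
Proof. destruct b; unfold sumsq, Rsum, ind; simpl; ring. Qed.

Lemma len_ind {A : Type} (b : bool) (y : A) : length (if b then [y] else @nil A) = (if b then 1 else 0)%nat.
Proof. destruct b; reflexivity. Qed.

Lemma sumsq_app l1 l2 : sumsq (l1 ++ l2) = sumsq l1 + sumsq l2.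
Proof. unfold sumsq. rewrite map_app. apply Rsum_app. Qed.

Lemma sq_dev L c : Rsum (map (fun y => (y - c) ^ 2) L) = sumsq L - 2 * c * Rsum L + c ^ 2 * INR (length L).
Proof.
  induction L as [|a L IH].
  - unfold sumsq, Rsum; simpl; ring.
  - unfold sumsq in *. cbn [map]. rewrite !Rsum_cons, IH.
    change (length (a :: L)) with (S (length L)). rewrite S_INR. ring.
Qed.

Lemma sse_group L : Rsum (map (fun y => (y - Rsum L / INR (length L)) ^ 2) L) = sumsq L - Fq L.
Proof.
  rewrite sq_dev. unfold Fq. destruct L as [|a L'].
  - unfold sumsq, Rsum, Fr; simpl; ring.
  - change (length (a :: L')) with (S (length L')).
    rewrite Fr_S. assert (0 < INR (S (length L'))) by (apply lt_0_INR; lia). field. lra.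
Qed.

Lemma ssa_group L mu : INR (length L) * (Rsum L / INR (length L) - mu) ^ 2
  = Fq L - 2 * mu * Rsum L + mu ^ 2 * INR (length L).
Proof.
  unfold Fq. destruct L as [|a L'].
  - unfold Rsum, Fr; simpl; ring.
  - change (length (a :: L')) with (S (length L')).
    rewrite Fr_S. assert (0 < INR (S (length L'))) by (apply lt_0_INR; lia). field. lra.
Qed.

Lemma total_sum k D : (forall r, In r D -> (1 <= fst r <= k)%nat) ->
  sum_groups k (fun i => Rsum (group D i)) = Rsum (map snd D) /\
  sum_groups k (fun i => n_i D i) = INR (length D).
Proof.
  unfold sum_groups, n_i. induction D as [|r D IH]; intros H.
  - clear H. split; induction (seq 1 k) as [|a l IHl]; cbn [map]; try (unfold Rsum; simpl; ring);
      rewrite Rsum_cons, IHl; unfold group, Rsum; simpl; ring.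
  - destruct IH as [IH1 IH2]; [intros; apply H; right; auto|].
    assert (Hr := H r (or_introl eq_refl)).
    split.
    + rewrite (Rsum_map_ext _ _ (fun i => ind (Nat.eqb (fst r) i) (snd r) + Rsum (group D i))).
      * rewrite Rsum_map_plus, IH1, ind_sum_in by auto. cbn [map]. rewrite Rsum_cons. ring.
      * intros i. rewrite group_cons, Rsum_app, Rsum_ind. reflexivity.
    + rewrite (Rsum_map_ext _ _ (fun i => ind (Nat.eqb (fst r) i) 1 + INR (length (group D i)))).
      * rewrite Rsum_map_plus, IH2, ind_sum_in by auto.
        change (length (r :: D)) with (S (length D)). rewrite S_INR. ring.
      * intros i. rewrite group_cons, length_app, len_ind, plus_INR. unfold ind.
        destruct (Nat.eqb _ _); simpl; ring.
Qed.
Lemma div_abs_le A B c : 0 < B -> - (c * B) <= A <= c * B -> Rabs (A / B) <= c.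
Proof.
  intros HB [H1 H2]. apply Rabs_le. split.
  - apply Rmult_le_reg_r with B; auto. unfold Rdiv. rewrite Rmult_assoc, Rinv_l; lra.
  - apply Rmult_le_reg_r with B; auto. unfold Rdiv. rewrite Rmult_assoc, Rinv_l; lra.
Qed.
Lemma Fr_add1 s m y : 0 <= s <= INR m -> 0 <= y <= 1 ->
  Rabs (Fr (s + y) (S m) - Fr s m) <= 1.
Proof.
  intros Hs Hy. destruct m as [|m0].
  - simpl in Hs. assert (s = 0) by lra. subst. unfold Fr. simpl.
    rewrite Rabs_right; nra.
  - unfold Fr. set (M := INR (S m0)) in *.
    assert (HM : 0 < M) by (apply lt_0_INR; lia).
    assert (HM1 : INR (S (S m0)) = M + 1) by (unfold M; rewrite (S_INR (S m0)); ring).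
    rewrite HM1.
    replace ((s + y) ^ 2 / (M + 1) - s ^ 2 / M) with
      ((- s^2 + 2*M*s*y + M*y^2) / (M * (M + 1))) by (field; lra).
    apply div_abs_le; [nra|]. split.
    + assert (0 <= 2*M*s*y + M*y^2) by (apply Rplus_le_le_0_compat; apply Rmult_le_pos; nra).
      assert (s^2 <= M^2) by nra. nra.
    + assert (0 <= (s - M*y)^2) by apply pow2_ge_0.
      assert (M*(M+1)*y^2 <= M*(M+1)*1) by (apply Rmult_le_compat_l; nra).
      nra.
Qed.

Lemma Fr_bound s m d d' y y' : 0 <= s <= INR m -> 0 <= y <= 1 -> 0 <= y' <= 1 ->
  Rabs (Fr (s + ind d y) (m + (if d then 1 else 0)) - Fr (s + ind d' y') (m + (if d' then 1 else 0)))
  <= ind d 1 + ind d' 1.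
Proof.
  intros Hs Hy Hy'. destruct d, d'; simpl ind; rewrite ?Nat.add_0_r, ?Nat.add_1_r, ?Rplus_0_r.
  - unfold Fr. rewrite S_INR.
    replace ((s + y) ^ 2 / (INR m + 1) - (s + y') ^ 2 / (INR m + 1)) with
      (((y - y') * (2*s + y + y')) / (INR m + 1)) by (field; lra).
    apply div_abs_le; [lra|]. split; nra.
  - pose proof (Fr_add1 s m y Hs Hy). lra.
  - rewrite Rabs_minus_sym. pose proof (Fr_add1 s m y' Hs Hy'). lra.
  - rewrite Rminus_diag, Rabs_R0. lra.
Qed.

Lemma Rsum_map_minus {A} (l : list A) f g :
  Rsum (map (fun i => f i - g i) l) = Rsum (map f l) - Rsum (map g l).
Proof. induction l; cbn [map]; [unfold Rsum; simpl; ring|]. rewrite !Rsum_cons, IHl. ring. Qed.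

Lemma decomp (D D' : db) : forall j, length D = length D' -> (j < length D)%nat ->
  (forall i, i <> j -> nth i D (0%nat, 0) = nth i D' (0%nat, 0)) ->
  exists pre post r r', D = pre ++ r :: post /\ D' = pre ++ r' :: post.
Proof.
  revert D'. induction D as [|a D IH]; intros D' j Hl Hj Hn; [simpl in Hj; lia|].
  destruct D' as [|a' D']; [discriminate|]. simpl in Hl, Hj.
  destruct j as [|j].
  - exists [], D, a, a'. split; [reflexivity|]. simpl. f_equal.
    apply nth_ext with (0%nat, 0) (0%nat, 0); [lia|].
    intros m _. symmetry. apply (Hn (S m)). lia.
  - destruct (IH D' j) as [pre [post [r [r' [H1 H2]]]]]; try lia.
    + intros i Hi. apply (Hn (S i)). lia.
    + exists (a :: pre), post, r, r'. rewrite H1, H2. split; [reflexivity|].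
      simpl. f_equal. symmetry. apply (Hn 0%nat). lia.
Qed.

Lemma group_in L i x : In x (group L i) -> exists r, In r L /\ snd r = x.
Proof.
  unfold group. intros H. apply in_map_iff in H. destruct H as [r [H1 H2]].
  apply filter_In in H2. exists r. tauto.
Qed.

Lemma group_split (pre post : db) (r : row) (i : nat) :
  group (pre ++ r :: post) i = group pre i ++ (if Nat.eqb (fst r) i then [snd r] else []) ++ group post i.
Proof. rewrite group_app, group_cons. reflexivity. Qed.

Lemma Fq_split (gp gq : list R) (b : bool) (y : R) :
  Fq (gp ++ (if b then [y] else []) ++ gq) =
  Fr (Rsum (gp ++ gq) + ind b y) (length (gp ++ gq) + if b then 1 else 0).
Proof.
  unfold Fq. f_equal.
  - rewrite !Rsum_app, Rsum_ind. ring.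
  - rewrite !length_app, len_ind. lia.
Qed.

Lemma sumsq_split (gp gq : list R) (b : bool) (y : R) :
  sumsq (gp ++ (if b then [y] else []) ++ gq) = sumsq (gp ++ gq) + ind b (y ^ 2).
Proof. rewrite !sumsq_app, sumsq_ind. ring. Qed.

Section Sens.
Variables (k n : nat) (pre post : db) (r r' : row).
Hypothesis Hall : forall x, In x (pre ++ post) -> 0 <= snd x <= 1.
Hypothesis Hr : 0 <= snd r <= 1.
Hypothesis Hr' : 0 <= snd r' <= 1.

Let D := pre ++ r :: post.
Let D' := pre ++ r' :: post.

Lemma G01 i : all01 (group pre i ++ group post i).
Proof.
  intros x Hx. rewrite <- group_app in Hx. apply group_in in Hx.
  destruct Hx as [q [Hq <-]]. apply Hall; auto.
Qed.

Lemma Fq_diff i : Rabs (Fq (group D i) - Fq (group D' i)) <=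
  ind (Nat.eqb (fst r) i) 1 + ind (Nat.eqb (fst r') i) 1.
Proof.
  unfold D, D'. rewrite !group_split, !Fq_split.
  apply Fr_bound; auto.
  apply Rsum_bounds. apply G01.
Qed.

Lemma sumFq_diff : Rabs (sum_groups k (fun i => Fq (group D i)) - sum_groups k (fun i => Fq (group D' i))) <= 2.
Proof.
  unfold sum_groups. rewrite <- Rsum_map_minus.
  eapply Rle_trans; [apply Rsum_map_abs|].
  eapply Rle_trans; [apply Rsum_map_le; intro i; apply Fq_diff|].
  rewrite Rsum_map_plus.
  pose proof (ind_sum_le (fst r) 1 k). pose proof (ind_sum_le (fst r') 1 k). lra.
Qed.

Lemma sumsq_diff : Rabs (sum_groups k (fun i => sumsq (group D i)) - sum_groups k (fun i => sumsq (group D' i))) <= 1.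
Proof.
  unfold sum_groups. rewrite <- Rsum_map_minus.
  rewrite (Rsum_map_ext _ _ (fun i => ind (Nat.eqb (fst r) i) (snd r ^ 2) - ind (Nat.eqb (fst r') i) (snd r' ^ 2))).
  - rewrite Rsum_map_minus.
    assert (0 <= snd r ^ 2 <= 1) by nra. assert (0 <= snd r' ^ 2 <= 1) by nra.
    pose proof (ind_sum_le (fst r) (snd r ^ 2) k). pose proof (ind_sum_le (fst r') (snd r' ^ 2) k).
    apply Rabs_le. lra.
  - intro i. unfold D, D'. rewrite !group_split, !sumsq_split. ring.
Qed.

End Sens.

Lemma abs_bounds x c : Rabs x <= c -> - c <= x <= c.
Proof. intros H. pose proof (Rle_abs x). pose proof (Rle_abs (- x)). rewrite Rabs_Ropp in H1. lra. Qed.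

Lemma SSE_expr k D : SSE k D = sum_groups k (fun i => sumsq (group D i) - Fq (group D i)).
Proof. unfold SSE, sum_groups. apply Rsum_map_ext. intro i. unfold mean_i, n_i. apply sse_group. Qed.

Lemma SSA_expr k D : (forall r, In r D -> (1 <= fst r <= k)%nat) -> (0 < length D)%nat ->
  SSA k D = sum_groups k (fun i => Fq (group D i)) - Rsum (map snd D) ^ 2 / INR (length D).
Proof.
  intros Hl Hn. destruct (total_sum k D Hl) as [T1 T2].
  unfold SSA, mean_all. set (mu := Rsum (map snd D) / INR (length D)).
  unfold sum_groups in *.
  rewrite (Rsum_map_ext _ _ (fun i => (Fq (group D i) + (-2 * mu) * Rsum (group D i)) + mu ^ 2 * n_i D i)).
  - rewrite !Rsum_map_plus, !Rsum_map_scal. unfold n_i in *. rewrite T1, T2. unfold mu.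
    assert (0 < INR (length D)) by (apply lt_0_INR; lia). field. lra.
  - intro i. unfold mean_i, n_i. rewrite ssa_group. unfold mu. unfold row, db in *. ring.
Qed.

Lemma Rsum_snd01 (L : db) : (forall x, In x L -> 0 <= snd x <= 1) -> 0 <= Rsum (map snd L) <= INR (length L).
Proof.
  intros H. unfold db, row in *. rewrite <- (length_map snd L). apply Rsum_bounds.
  intros x Hx. apply in_map_iff in Hx. destruct Hx as [q [<- Hq]]. auto.
Qed.

Lemma sens k n pre post r r' :
  (forall x, In x (pre ++ r :: post) -> (1 <= fst x <= k)%nat /\ 0 <= snd x <= 1) ->
  (forall x, In x (pre ++ r' :: post) -> (1 <= fst x <= k)%nat /\ 0 <= snd x <= 1) ->
  length (pre ++ r :: post) = n ->
  Rabs (SSE k (pre ++ r :: post) - SSE k (pre ++ r' :: post)) <= 3 /\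
  Rabs (SSA k (pre ++ r :: post) - SSA k (pre ++ r' :: post)) <= 4.
Proof.
  intros H1 H2 Hn.
  assert (Hall : forall x, In x (pre ++ post) -> 0 <= snd x <= 1).
  { intros x Hx. apply in_app_or in Hx. apply H1. apply in_or_app. destruct Hx; [left|right; right]; auto. }
  assert (Hr : 0 <= snd r <= 1) by (apply H1; apply in_or_app; right; left; auto).
  assert (Hr' : 0 <= snd r' <= 1) by (apply H2; apply in_or_app; right; left; auto).
  pose proof (sumFq_diff k pre post r r' Hall Hr Hr') as HF.
  pose proof (sumsq_diff k pre post r r' Hr Hr') as HQ.
  apply abs_bounds in HF. apply abs_bounds in HQ.
  split.
  - rewrite !SSE_expr. unfold sum_groups in *. rewrite !Rsum_map_minus. apply Rabs_le. unfold db, row in *. lra.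
  - rewrite !SSA_expr; try (intros x Hx; apply (proj1 (H1 x Hx))); try (intros x Hx; apply (proj1 (H2 x Hx)));
      try (rewrite length_app; simpl; lia).
    assert (Hlen : length (pre ++ r' :: post) = length (pre ++ r :: post)) by (rewrite !length_app; reflexivity).
    rewrite Hlen, Hn.
    pose proof (Rsum_snd01 _ Hall) as Ht. rewrite length_app in Ht.
    assert (HnL : (length pre + length post + 1 = n)%nat) by (rewrite <- Hn, length_app; simpl; lia).
    assert (HN : INR n = INR (length pre + length post) + 1) by (rewrite <- HnL, plus_INR; reflexivity).
    rewrite !map_app, !Rsum_app in *. cbn [map] in *. rewrite !Rsum_cons in *.
    set (t := Rsum (map snd pre) + Rsum (map snd post)) in *.
    assert (HE : (Rsum (map snd pre) + (snd r + Rsum (map snd post))) ^ 2 / INR n -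
             (Rsum (map snd pre) + (snd r' + Rsum (map snd post))) ^ 2 / INR n
      = (((snd r - snd r') * (2 * t + snd r + snd r')) / INR n)) by (unfold t; field; lra).
    assert (Hdiv : Rabs (((snd r - snd r') * (2 * t + snd r + snd r')) / INR n) <= 2).
    { apply div_abs_le; [lra|]. split; nra. }
    apply abs_bounds in Hdiv.
    apply Rabs_le. unfold sum_groups, db, row in *. lra.
Qed.

Lemma rect_cmp eps b1 b2 c1 c1' c2 c2' rr : 0 < b1 -> 0 < b2 ->
  Rabs (c1 - c1') / b1 + Rabs (c2 - c2') / b2 <= eps ->
  rect_mass b1 c1 b2 c2 rr <= exp eps * rect_mass b1 c1' b2 c2' rr.
Proof.
  intros Hb1 Hb2 He. destruct rr as [[x1 y1] [x2 y2]]. simpl.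
  pose proof (lap_mass_le b1 c1 c1' x1 y1 Hb1) as L1.
  pose proof (lap_mass_le b2 c2 c2' x2 y2 Hb2) as L2.
  pose proof (lap_mass_nonneg b1 c1 x1 y1 Hb1).
  pose proof (lap_mass_nonneg b1 c1' x1 y1 Hb1).
  pose proof (lap_mass_nonneg b2 c2 x2 y2 Hb2).
  pose proof (lap_mass_nonneg b2 c2' x2 y2 Hb2).
  assert (HE : exp (Rabs (c1 - c1') / b1) * exp (Rabs (c2 - c2') / b2) <= exp eps)
    by (rewrite <- exp_plus; apply exp_le_mono; auto).
  pose proof (exp_pos (Rabs (c1 - c1') / b1)). pose proof (exp_pos (Rabs (c2 - c2') / b2)).
  apply Rle_trans with ((exp (Rabs (c1 - c1') / b1) * lap_mass b1 c1' x1 y1) *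
                        (exp (Rabs (c2 - c2') / b2) * lap_mass b2 c2' x2 y2)).
  - apply Rmult_le_compat; auto.
  - replace ((exp (Rabs (c1 - c1') / b1) * lap_mass b1 c1' x1 y1) *
                        (exp (Rabs (c2 - c2') / b2) * lap_mass b2 c2' x2 y2))
      with ((exp (Rabs (c1 - c1') / b1) * exp (Rabs (c2 - c2') / b2)) *
            (lap_mass b1 c1' x1 y1 * lap_mass b2 c2' x2 y2)) by ring.
    apply Rmult_le_compat_r; [apply Rmult_le_pos; auto|]. exact HE.
Qed.

Lemma bound_eps eps n a b : 0 < eps -> (0 < n)%nat -> 0 <= a <= 4 -> 0 <= b <= 3 ->
  a / b_SSA eps n + b / b_SSE eps <= eps.
Proof.
  intros He Hn Ha Hb. unfold b_SSA, b_SSE.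
  assert (HnR : 0 < INR n) by (apply lt_0_INR; lia).
  assert (H5 : 0 <= 5 / INR n) by (unfold Rdiv; apply Rmult_le_pos; [lra|left; apply Rinv_0_lt_compat; auto]).
  set (A := 9 + 5 / INR n) in *.
  assert (HA : 9 <= A) by (unfold A; lra).
  replace (a / (A / (eps / 2))) with (a * (eps / 2) * / A) by (field; lra).
  replace (b / (7 / (eps / 2))) with (b * (eps / 2) / 7) by (field; lra).
  assert (a * (eps / 2) * / A <= a * (eps / 2) * / 9).
  { apply Rmult_le_compat_l; [nra|]. apply Rinv_le_contravar; lra. }
  nra.
Qed.

Theorem mainTheorem3 (eps : R) (k n : nat) :
  0 < eps -> (2 <= k)%nat -> (k < n)%nat ->
  forall D D' : db,
    valid_db k n D -> valid_db k n D' -> neighboring n D D' ->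
    forall S : R3 -> Prop, borel3 S ->
      prob_alg eps k n D S <= exp eps * prob_alg eps k n D' S.
Proof.
  intros Heps Hk Hkn D D' [HlD HvD] [HlD' HvD'] [_ [_ [j [Hj [_ Hnth]]]]] S _.
  destruct (decomp D D' j) as [pre [post [r [r' [E1 E2]]]]]; try lia; auto.
  subst D D'.
  destruct (sens k n pre post r r' HvD HvD' HlD) as [H1 H2].
  assert (Hb1 : 0 < b_SSA eps n).
  { unfold b_SSA. assert (0 < INR n) by (apply lt_0_INR; lia).
    assert (0 <= 5 / INR n) by (unfold Rdiv; apply Rmult_le_pos; [lra|left; apply Rinv_0_lt_compat; auto]).
    unfold Rdiv at 1. apply Rmult_lt_0_compat; [lra|]. apply Rinv_0_lt_compat; lra. }
  assert (Hb2 : 0 < b_SSE eps).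
  { unfold b_SSE, Rdiv. apply Rmult_lt_0_compat; [lra|]. apply Rinv_0_lt_compat; lra. }
  assert (Hn0 : (0 < n)%nat) by lia.
  pose proof (Rabs_pos (SSA k (pre ++ r :: post) - SSA k (pre ++ r' :: post))).
  pose proof (Rabs_pos (SSE k (pre ++ r :: post) - SSE k (pre ++ r' :: post))).
  unfold prob_alg. apply prob2_cmp; [exact Hb1 | exact Hb2 | apply exp_pos | |].
  - intro rr. apply rect_cmp; [exact Hb1 | exact Hb2 |].
    apply bound_eps; [exact Heps | exact Hn0 | split; assumption | split; assumption].
  - intro rr. apply rect_cmp; [exact Hb1 | exact Hb2 |].
    rewrite (Rabs_minus_sym (SSA _ _)), (Rabs_minus_sym (SSE _ _)).
    apply bound_eps; [exact Heps | exact Hn0 | split; assumption | split; assumption].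
Qed.
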